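(* Let $\mathcal{V}$ be an entropic Jónsson–Tarski variety and $A$ a $\mathcal{V}$-algebra. Then: (1) $Inv(A)$ is a $\mathcal{V}$-subalgebra of $A$ (with embedding $\upsilon_A$) and hence an internal submonoid of the internal monoid $(A,+^A,0)$. (2) Every $\mathcal{V}$-homomorphism $f\colon A\to B$ restricts and corestricts to a $\mathcal{V}$-homomorphism $Inv(A)\to Inv(B)$. In particular, for every $\mathcal{V}$-algebra $B$ and every $b\in B$, the homomorphism $b_r\colon A\to A\otimes B$, $a\mapsto a\otimes b$, restricts to a homomorphism $Inv(A)\to Inv(A\otimes B)$; hence $\upsilon_A\otimes\upsilon_B$ factors as $Inv(A)\otimes Inv(B)\xrightarrow{\upsilon_{A,B}} Inv(A\otimes B)\hookrightarrow A\otimes B$; moreover, for every monoid $(A,m,e)$ in $\mathcal{V}$ and all $a,b\in Inv(A)$ one has $m(a\otimes b)\in Inv(A)$. (3) For every $\mathcal{V}$-homomorphism $f\colon A\to B$ and every $x\in Inv(A)$ one has $f(-x)=-f(x)$. (4) The map $i\colon Inv(A)\to Inv(A)$, $x\mapsto -x$, is a $\mathcal{V}$-homomorphism. Consequently $Inv(A)$ is a commutative internal group in $\mathcal{V}$, and in fact the largest internal group contained in $A$.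
   Context: A variety is a finitary one-sorted variety of algebras. It is entropic if its algebraic theory is commutative (every operation is a homomorphism); then it is a symmetric monoidal closed category under the entropic tensor product $A\otimes B$, characterized by a bimorphism $A\times B\to A\otimes B$, $(a,b)\mapsto a\otimes b$, through which every bimorphism (map homomorphic in each variable separately) $A\times B\to C$ factors uniquely via a homomorphism $A\otimes B\to C$; the unit object is the free algebra $F1$ on one generator. A Jónsson–Tarski variety has a nullary operation $0$ and a binary operation $+$ with $x+0=x=0+x$; in an entropic one, $(A,+^A,0)$ is a commutative internal monoid in $\mathcal{V}$. An element $x\in A$ is invertible if there is $y\in A$ with $x+y=0=y+x$; such $y$ is unique and denoted $-x$. $Inv(A)$ denotes the set of invertible elements of $A$. A monoid in $\mathcal{V}$ is a triple $(A,m,e)$ with homomorphisms $m\colon A\otimes A\to A$, $e\colon F1\to A$ satisfying associativity and unit laws. An internal group in $\mathcal{V}$ is a group object in the category $\mathcal{V}$ (with respect to finite products). *)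

(* Defs.v *)
From mathcomp Require Import all_boot.
From Stdlib Require Import ClassicalEpsilon.

Unset Printing Implicit Defensive.

Record signature := Signature { op : Type; arity : op -> nat }.
Arguments arity {s} _ : rename.

Record algebra (S : signature) := Algebra {
  carrier :> Type;
  interp : forall o : op S, ('I_(arity o) -> carrier) -> carrier }.
Arguments interp {S} a o _ : rename.

Inductive term (S : signature) (X : Type) : Type :=
| Var : X -> term S X
| App : forall o : op S, ('I_(arity o) -> term S X) -> term S X.
Arguments Var {S X} x.
Arguments App {S X} o args.

Fixpoint eval (S : signature) (X : Type) (A : algebra S) (env : X -> A)
  (t : term S X) : A :=
  match t with
  | Var x => env x
  | App o args => interp A o (fun i => @eval S X A env (args i))
  end.
Arguments eval {S X} A env t.

Record variety := Variety {
  vsig : signature;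
  axioms : term vsig nat -> term vsig nat -> Prop }.

Definition in_variety (V : variety) (A : algebra (vsig V)) : Prop :=
  forall l r, axioms V l r -> forall env : nat -> A, eval A env l = eval A env r.

Definition hom (S : signature) (A B : algebra S) (f : A -> B) : Prop :=
  forall o (args : 'I_(arity o) -> A),
    f (interp A o args) = interp B o (fun i => f (args i)).
Arguments hom {S A B} f.

Definition op_closed (S : signature) (A : algebra S) (P : A -> Prop) : Prop :=
  forall o (args : 'I_(arity o) -> A), (forall i, P (args i)) -> P (interp A o args).
Arguments op_closed {S A} P.

Definition subalg (S : signature) (A : algebra S) (P : A -> Prop)
  (H : op_closed P) : algebra S :=
  {| carrier := {x : A | P x};
     interp := fun o args =>
       exist P (interp A o (fun i => proj1_sig (args i)))
             (H o _ (fun i => proj2_sig (args i))) |}.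
Arguments subalg {S A P} H.

Definition entropic (V : variety) : Prop :=
  forall A : algebra (vsig V), in_variety V A ->
  forall (o1 o2 : op (vsig V)) (x : 'I_(arity o1) -> 'I_(arity o2) -> A),
    interp A o1 (fun i => interp A o2 (fun j => x i j)) =
    interp A o2 (fun j => interp A o1 (fun i => x i j)).

Section JT.
Variable S : signature.
Variables (z : term S Empty_set) (p : term S bool).

Definition zeroA (A : algebra S) : A :=
  eval A (fun e : Empty_set => match e with end) z.
Definition plusA (A : algebra S) (x y : A) : A :=
  eval A (fun b : bool => if b then x else y) p.

Definition is_inverse (A : algebra S) (x y : A) : Prop :=
  plusA A x y = zeroA A /\ plusA A y x = zeroA A.

Definition Inv (A : algebra S) (x : A) : Prop := exists y, is_inverse A x y.

(* -x : the (unique when it exists) inverse of x *)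
Definition negA (A : algebra S) (x : A) : A :=
  epsilon (inhabits x) (is_inverse A x).
End JT.
Arguments zeroA {S} z A.
Arguments plusA {S} p {A} x y.
Arguments is_inverse {S} z p {A} x y.
Arguments Inv {S} z p {A} x.
Arguments negA {S} z p {A} x.

Definition jonsson_tarski (V : variety) (z : term (vsig V) Empty_set)
  (p : term (vsig V) bool) : Prop :=
  forall A : algebra (vsig V), in_variety V A ->
  forall x : A, plusA p x (zeroA z A) = x /\ plusA p (zeroA z A) x = x.

Definition bimorphism (S : signature) (A B C : algebra S) (h : A -> B -> C) : Prop :=
  (forall a, hom (h a)) /\ (forall b, hom (fun a => h a b)).
Arguments bimorphism {S A B C} h.

Definition is_tensor (V : variety) (A B T : algebra (vsig V)) (t : A -> B -> T) : Prop :=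
  in_variety V T /\ bimorphism t /\
  forall C : algebra (vsig V), in_variety V C ->
  forall h : A -> B -> C, bimorphism h ->
  exists g : T -> C, hom g /\ (forall a b, g (t a b) = h a b) /\
    (forall g' : T -> C, hom g' -> (forall a b, g' (t a b) = h a b) ->
       forall w, g' w = g w).
Arguments is_tensor {V A B T} t.

Definition free1 (V : variety) (F : algebra (vsig V)) (g : F) : Prop :=
  in_variety V F /\
  forall C : algebra (vsig V), in_variety V C -> forall c : C,
  exists f : F -> C, hom f /\ f g = c /\
    (forall f' : F -> C, hom f' -> f' g = c -> forall w, f' w = f w).
Arguments free1 {V F} g.

(* a monoid (A, m, e) in (V, tensor, F1), with A (x) A given by (T, t) and
   F1 given by (F, g); the associativity and unit laws are written out on the
   generating elements  (a (x) b) (x) c  resp.  g (x) a, a (x) g. *)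
Definition is_V_monoid (V : variety) (A T F : algebra (vsig V))
  (t : A -> A -> T) (g : F) (m : T -> A) (e : F -> A) : Prop :=
  hom m /\ hom e /\
  (forall a b c, m (t (m (t a b)) c) = m (t a (m (t b c)))) /\
  (forall a, m (t (e g) a) = a /\ m (t a (e g)) = a).
Arguments is_V_monoid {V A T F} t g m e.

(* mul : G x G -> G homomorphism, e : 1 -> G homomorphism (1 = terminal,
   one-element algebra), inv : G -> G homomorphism, plus the group laws. *)
Definition internal_group (S : signature) (G : algebra S)
  (mul : G -> G -> G) (e : G) (inv : G -> G) : Prop :=
  (forall o (a b : 'I_(arity o) -> G),
      mul (interp G o a) (interp G o b) = interp G o (fun i => mul (a i) (b i))) /\
  (forall o, interp G o (fun _ => e) = e) /\
  hom inv /\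
  (forall x y w, mul (mul x y) w = mul x (mul y w)) /\
  (forall x, mul e x = x /\ mul x e = x) /\
  (forall x, mul (inv x) x = e /\ mul x (inv x) = e).
Arguments internal_group {S G} mul e inv.

(* Main.v *)
Require Import Defs.
From Stdlib Require Import ClassicalEpsilon FunctionalExtensionality ProofIrrelevance.
From mathcomp Require Import all_boot.

Definition entA {S : signature} (A : algebra S) : Prop :=
  forall (o1 o2 : op S) (x : 'I_(arity o1) -> 'I_(arity o2) -> A),
    interp A o1 (fun i => interp A o2 (fun j => x i j)) =
    interp A o2 (fun j => interp A o1 (fun i => x i j)).

Lemma sig_ext (T : Type) (P : T -> Prop) (x y : sig P) :
  proj1_sig x = proj1_sig y -> x = y.
Proof. destruct x as [x px], y as [y py]; simpl; intros ->; f_equal; apply proof_irrelevance. Qed.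

Lemma op_term {S : signature} {A : algebra S} (HE : entA A) {X : Type} (t : term S X)
  (o : op S) (m : X -> 'I_(arity o) -> A) :
  eval A (fun x => interp A o (fun i => m x i)) t =
  interp A o (fun i => eval A (fun x => m x i) t).
Proof.
  induction t as [x | o' args IH]; simpl; [reflexivity|].
  transitivity (interp A o' (fun k => interp A o (fun i => eval A (fun x => m x i) (args k)))).
  - f_equal; apply functional_extensionality; intro k; apply IH.
  - apply (HE o' o (fun k i => eval A (fun x => m x i) (args k))).
Qed.

Lemma term_term {S : signature} {A : algebra S} (HE : entA A) {X Y : Type}
  (t1 : term S X) (t2 : term S Y) (m : X -> Y -> A) :
  eval A (fun x => eval A (fun y => m x y) t2) t1 =
  eval A (fun y => eval A (fun x => m x y) t1) t2.
Proof.
  induction t2 as [y | o args IH]; simpl; [reflexivity|].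
  etransitivity.
  - apply (op_term HE t1 o (fun x i => eval A (fun y => m x y) (args i))).
  - f_equal; apply functional_extensionality; intro i; apply IH.
Qed.

Lemma hom_eval {S : signature} {A B : algebra S} {f : A -> B} (Hf : hom f)
  {X : Type} (env : X -> A) (t : term S X) :
  f (eval A env t) = eval B (fun x => f (env x)) t.
Proof.
  induction t as [x | o args IH]; simpl; [reflexivity|].
  rewrite Hf; f_equal; apply functional_extensionality; intro i; apply IH.
Qed.

Lemma eval_empty {S : signature} {A : algebra S} (z : term S Empty_set) (env : Empty_set -> A) :
  eval A env z = zeroA z A.
Proof. unfold zeroA; f_equal; apply functional_extensionality; intros []. Qed.


Lemma plus_op {S : signature} {A : algebra S} (HE : entA A) (p : term S bool)
  (o : op S) (a b : 'I_(arity o) -> A) :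
  plusA p (interp A o a) (interp A o b) = interp A o (fun i => plusA p (a i) (b i)).
Proof.
  unfold plusA.
  transitivity (eval A (fun bb : bool => interp A o (fun i => if bb then a i else b i)) p).
  - f_equal; apply functional_extensionality; intros []; reflexivity.
  - apply (op_term HE p o (fun bb i => if bb then a i else b i)).
Qed.

Lemma zero_op {S : signature} {A : algebra S} (HE : entA A) (z : term S Empty_set)
  (o : op S) : interp A o (fun _ => zeroA z A) = zeroA z A.
Proof.
  unfold zeroA; symmetry.
  transitivity (eval A (fun e : Empty_set => interp A o (fun i => (fun (e : Empty_set) (i : 'I_(arity o)) => match e return A with end) e i)) z).
  - f_equal; apply functional_extensionality; intros [].
  - rewrite (op_term HE z o (fun (e : Empty_set) (i : 'I_(arity o)) => match e return A with end)).
    f_equal.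
Qed.

Lemma plus_inter {S : signature} {A : algebra S} (HE : entA A) (p : term S bool) (a b c d : A) :
  plusA p (plusA p a b) (plusA p c d) = plusA p (plusA p a c) (plusA p b d).
Proof.
  pose (m := fun x y : bool => if x then (if y then a else b) else (if y then c else d)).
  have H := term_term HE p p m.
  unfold plusA.
  transitivity (eval A (fun x => eval A (fun y => m x y) p) p).
  - f_equal; apply functional_extensionality; intros []; reflexivity.
  - rewrite H; f_equal; apply functional_extensionality; intros []; reflexivity.
Qed.

Definition JT {S : signature} (z : term S Empty_set) (p : term S bool) (A : algebra S) :=
  forall x : A, plusA p x (zeroA z A) = x /\ plusA p (zeroA z A) x = x.

Lemma plus_comm {S} {A : algebra S} (HE : entA A) z p (HJ : JT z p A) (a b : A) :
  plusA p a b = plusA p b a.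
Proof.
  transitivity (plusA p (plusA p (zeroA z A) a) (plusA p b (zeroA z A))).
  - rewrite (proj2 (HJ a)) (proj1 (HJ b)); reflexivity.
  - rewrite (plus_inter HE) (proj2 (HJ b)) (proj1 (HJ a)); reflexivity.
Qed.

Lemma plus_assoc {S} {A : algebra S} (HE : entA A) z p (HJ : JT z p A) (a b c : A) :
  plusA p (plusA p a b) c = plusA p a (plusA p b c).
Proof.
  transitivity (plusA p (plusA p a b) (plusA p (zeroA z A) c)).
  - rewrite (proj2 (HJ c)); reflexivity.
  - rewrite (plus_inter HE) (proj1 (HJ a)); reflexivity.
Qed.

Lemma inv_unique {S} {A : algebra S} (HE : entA A) z p (HJ : JT z p A) (x y y' : A) :
  is_inverse z p x y -> is_inverse z p x y' -> y = y'.
Proof.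
  intros [H1 H2] [H3 H4].
  rewrite -(proj1 (HJ y)) -H3 -(plus_assoc HE z p HJ) H2 (proj2 (HJ y')) //.
Qed.


Lemma neg_spec {S} {A : algebra S} z p {x : A} : Inv z p x -> is_inverse z p x (negA z p x).
Proof. intro H; unfold negA; apply epsilon_spec; exact H. Qed.

Lemma neg_unique {S} {A : algebra S} (HE : entA A) z p (HJ : JT z p A) (x y : A) :
  is_inverse z p x y -> negA z p x = y.
Proof.
  intro H; apply (inv_unique HE z p HJ _ _ _ (neg_spec z p (ex_intro _ y H)) H).
Qed.

Lemma hom_plus {S} {A B : algebra S} (f : A -> B) (Hf : hom f) p (x y : A) :
  f (plusA p x y) = plusA p (f x) (f y).
Proof.
  unfold plusA; rewrite (hom_eval Hf); f_equal; apply functional_extensionality; intros []; reflexivity.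
Qed.

Lemma hom_zero {S} {A B : algebra S} (f : A -> B) (Hf : hom f) z :
  f (zeroA z A) = zeroA z B.
Proof. unfold zeroA at 1; rewrite (hom_eval Hf); apply eval_empty. Qed.

Lemma hom_inverse {S} {A B : algebra S} (f : A -> B) (Hf : hom f) z p (x y : A) :
  is_inverse z p x y -> is_inverse z p (f x) (f y).
Proof.
  intros [H1 H2]; split; rewrite -hom_plus // ?H1 ?H2 hom_zero //.
Qed.

Lemma hom_Inv {S} {A B : algebra S} (f : A -> B) (Hf : hom f) z p (x : A) :
  Inv z p x -> Inv z p (f x).
Proof. intros [y Hy]; exists (f y); apply hom_inverse; auto. Qed.

Lemma Inv_closed {S} {A : algebra S} (HE : entA A) z p (HJ : JT z p A) :
  op_closed (Inv z p (A:=A)).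
Proof.
  intros o args H.
  exists (interp A o (fun i => negA z p (args i))).
  split; rewrite (plus_op HE) -(zero_op HE z o); f_equal; apply functional_extensionality; intro i;
    apply (neg_spec z p (H i)).
Qed.

Lemma Inv_zero {S} {A : algebra S} z p (HJ : JT z p A) : Inv z p (zeroA z A).
Proof. exists (zeroA z A); split; apply HJ. Qed.

Lemma Inv_plus {S} {A : algebra S} (HE : entA A) z p (HJ : JT z p A) (x y : A) :
  Inv z p x -> Inv z p y -> Inv z p (plusA p x y).
Proof.
  intros [x' [H1 H2]] [y' [H3 H4]]; exists (plusA p x' y').
  split; rewrite (plus_inter HE) ?H1 ?H2 ?H3 ?H4; apply HJ.
Qed.

Lemma Inv_neg {S} {A : algebra S} z p {x : A} : Inv z p x -> Inv z p (negA z p x).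
Proof. intro H; exists x; destruct (neg_spec z p H); split; auto. Qed.

Lemma eval_sub {S} {A : algebra S} {P : A -> Prop} (H : op_closed P) {X : Type}
  (env : X -> subalg H) (t : term S X) :
  proj1_sig (eval (subalg H) env t) = eval A (fun x => proj1_sig (env x)) t.
Proof.
  induction t as [x | o args IH]; simpl; [reflexivity|].
  f_equal; apply functional_extensionality; intro i; apply IH.
Qed.

Lemma sub_variety (V : variety) (A : algebra (vsig V)) (HA : in_variety V A)
  (P : A -> Prop) (H : op_closed P) : in_variety V (subalg H).
Proof.
  intros l r Hax env; apply sig_ext; rewrite !eval_sub; apply HA; exact Hax.
Qed.

Lemma sub_plus {S} {A : algebra S} {P : A -> Prop} (H : op_closed P) p (x y : subalg H) :
  proj1_sig (plusA p x y) = plusA p (proj1_sig x) (proj1_sig y).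
Proof.
  unfold plusA; rewrite eval_sub; f_equal; apply functional_extensionality; intros []; reflexivity.
Qed.

Lemma sub_zero {S} {A : algebra S} {P : A -> Prop} (H : op_closed P) z :
  proj1_sig (zeroA z (subalg H)) = zeroA z A.
Proof. unfold zeroA at 1; rewrite eval_sub; apply eval_empty. Qed.

Lemma sub_Inv {S} {A : algebra S} z p (HI : op_closed (Inv z p (A:=A))) (x : subalg HI) :
  Inv z p x.
Proof.
  destruct x as [x px].
  exists (exist _ (negA z p x) (Inv_neg z p px)).
  destruct (neg_spec z p px) as [H1 H2].
  split; apply sig_ext; rewrite sub_plus sub_zero /=; assumption.
Qed.

Lemma closed_e {S} {G : algebra S} (e : G) (Hfix : forall o, interp G o (fun _ => e) = e)
  (env : Empty_set -> G) (t : term S Empty_set) : eval G env t = e.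
Proof.
  induction t as [x | o args IH]; [destruct x|]; simpl.
  rewrite -(Hfix o); f_equal; apply functional_extensionality; intro i; apply IH.
Qed.

Lemma mul_term {S} {G : algebra S} (mul : G -> G -> G)
  (Hmul : forall o (a b : 'I_(arity o) -> G),
      mul (interp G o a) (interp G o b) = interp G o (fun i => mul (a i) (b i)))
  {X} (env1 env2 : X -> G) (t : term S X) :
  mul (eval G env1 t) (eval G env2 t) = eval G (fun x => mul (env1 x) (env2 x)) t.
Proof.
  induction t as [x | o args IH]; simpl; [reflexivity|].
  rewrite Hmul; f_equal; apply functional_extensionality; intro i; apply IH.
Qed.

Lemma group_Inv {S} {G : algebra S} z p (HJ : JT z p G) (mul : G -> G -> G) (e : G) (inv : G -> G) :
  internal_group mul e inv -> forall x, is_inverse z p x (inv x).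
Proof.
  intros [Hmul [Hfix [_ [_ [Hunit Hinv]]]]].
  have Z : zeroA z G = e by apply closed_e.
  have P : forall x y, mul x y = plusA p x y.
  { intros x y.
    rewrite -{1}(proj1 (HJ x)) -{1}(proj2 (HJ y)).
    unfold plusA at 1 2; rewrite mul_term.
    unfold plusA; f_equal; apply functional_extensionality; intros []; rewrite Z.
    - apply Hunit. - apply Hunit. - exact Hmul. }
  intro x; split; rewrite -P Z; apply Hinv.
Qed.

Lemma neg_op {S} {A : algebra S} (HE : entA A) z p (HJ : JT z p A)
  (o : op S) (args : 'I_(arity o) -> A) : (forall i, Inv z p (args i)) ->
  negA z p (interp A o args) = interp A o (fun i => negA z p (args i)).
Proof.
  intro H; apply (neg_unique HE z p HJ).
  split; rewrite (plus_op HE) -(zero_op HE z o); f_equal; apply functional_extensionality; intro i;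
    apply (neg_spec z p (H i)).
Qed.

Theorem lemma1p5 (V : variety) (z : term (vsig V) Empty_set) (p : term (vsig V) bool)
  (HE : entropic V) (HJT : jonsson_tarski V z p)
  (A : algebra (vsig V)) (HA : in_variety V A) :
  (* (1) Inv(A) is a subalgebra, and an internal submonoid of (A, +, 0) *)
  (op_closed (Inv z p (A:=A)) /\ Inv z p (zeroA z A) /\
   (forall x y : A, Inv z p x -> Inv z p y -> Inv z p (plusA p x y))) /\
  (* (2) homomorphisms restrict to Inv *)
  (forall (B : algebra (vsig V)), in_variety V B ->
     forall f : A -> B, hom f -> forall x, Inv z p x -> Inv z p (f x)) /\
  (* (2) b_r : a |-> a (x) b restricts to Inv(A) -> Inv(A (x) B) *)
  (forall (B T : algebra (vsig V)) (t : A -> B -> T), in_variety V B ->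
     is_tensor t -> forall (b : B) (a : A), Inv z p a -> Inv z p (t a b)) /\
  (* (2) upsilon_A (x) upsilon_B factors through Inv(A (x) B) *)
  (forall (B T : algebra (vsig V)) (t : A -> B -> T), in_variety V B ->
     is_tensor t ->
     forall (HIA : op_closed (Inv z p (A:=A))) (HIB : op_closed (Inv z p (A:=B)))
       (TI : algebra (vsig V)) (ti : subalg HIA -> subalg HIB -> TI),
     is_tensor ti ->
     forall u : TI -> T, hom u ->
       (forall x y, u (ti x y) = t (proj1_sig x) (proj1_sig y)) ->
       forall w, Inv z p (u w)) /\
  (* (2) for a monoid (A, m, e) in V, m(a (x) b) is invertible for invertible a, b *)
  (forall (T F : algebra (vsig V)) (t : A -> A -> T) (g : F) (m : T -> A) (e : F -> A),
     is_tensor t -> free1 g -> is_V_monoid t g m e ->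
     forall a b, Inv z p a -> Inv z p b -> Inv z p (m (t a b))) /\
  (* (3) homomorphisms preserve negatives *)
  (forall (B : algebra (vsig V)), in_variety V B ->
     forall f : A -> B, hom f -> forall x, Inv z p x -> f (negA z p x) = negA z p (f x)) /\
  (* (4) x |-> -x is a homomorphism Inv(A) -> Inv(A) *)
  ((forall x : A, Inv z p x -> Inv z p (negA z p x)) /\
   (forall o (args : 'I_(arity o) -> A), (forall i, Inv z p (args i)) ->
      negA z p (interp A o args) = interp A o (fun i => negA z p (args i)))) /\
  (* (4) Inv(A), with +, 0, -, is a commutative internal group in V *)
  (forall HIA : op_closed (Inv z p (A:=A)),
     exists (mul : subalg HIA -> subalg HIA -> subalg HIA) (e : subalg HIA)
            (inv : subalg HIA -> subalg HIA),
       internal_group mul e inv /\ (forall x y, mul x y = mul y x) /\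
       (forall x y, proj1_sig (mul x y) = plusA p (proj1_sig x) (proj1_sig y)) /\
       proj1_sig e = zeroA z A /\
       (forall x, proj1_sig (inv x) = negA z p (proj1_sig x))) /\
  (* (4) ... and the largest internal group contained in A *)
  (forall (G : algebra (vsig V)), in_variety V G ->
     forall (mul : G -> G -> G) (e : G) (inv : G -> G), internal_group mul e inv ->
     forall j : G -> A, hom j -> injective j -> forall x, Inv z p (j x)).
Proof.
  have HEA : entA A := HE A HA.
  have HJA : JT z p A := HJT A HA.
  have HIA0 := Inv_closed HEA z p HJA.
  split.
  { split; [exact HIA0|split; [exact (Inv_zero z p HJA)|]].
    intros x y Hx Hy; exact (Inv_plus HEA z p HJA x y Hx Hy). }
  split.
  { intros B HB f Hf x Hx; exact (hom_Inv f Hf z p x Hx). }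
  split.
  { intros B T t HB [HT [[Hbl Hbr] _]] b a H; exact (hom_Inv _ (Hbr b) z p a H). }
  split.
  { intros B T t HB Ht HIA HIB TI ti [HTI [[Hl Hr] HU]] u Hu Hut w.
    apply (hom_Inv u Hu z p).
    have HET : entA TI := HE TI HTI.
    have HJT' : JT z p TI := HJT TI HTI.
    have ICT := Inv_closed HET z p HJT'.
    have gen : forall x y, Inv z p (ti x y) :=
      fun x y => hom_Inv _ (Hr y) z p _ (sub_Inv z p HIA x).
    pose ti' := fun x y => (exist (Inv z p (A:=TI)) (ti x y) (gen x y) : subalg ICT).
    have Hbi : bimorphism ti'.
    { split; intros a o args; apply sig_ext; simpl; [apply Hl | apply (Hr a)]. }
    destruct (HU (subalg ICT) (sub_variety V TI HTI _ ICT) ti' Hbi) as [g [Hg [Hgt _]]].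
    destruct (HU TI HTI ti (conj Hl Hr)) as [g0 [_ [_ Huniq]]].
    have E1 := Huniq id (fun o args => erefl) (fun a b => erefl) w.
    have Hpg : hom (fun w => proj1_sig (g w)).
    { intros o args; simpl; rewrite Hg; reflexivity. }
    have E2 := Huniq (fun w => proj1_sig (g w)) Hpg (fun a b => f_equal (@proj1_sig _ _) (Hgt a b)) w.
    simpl in E1, E2. rewrite E1 -E2; apply proj2_sig. }
  split.
  { intros T F t g m e [_ [[_ Htr] _]] Hg [Hm [He _]] a b Ha Hb.
    have Hf : hom (fun a => m (t a b)).
    { intros o args; have := Htr b o args; simpl => ->; apply Hm. }
    exact (hom_Inv _ Hf z p a Ha). }
  split.
  { intros B HB f Hf x Hx; symmetry; apply (neg_unique (HE B HB) z p (HJT B HB)).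
    apply hom_inverse; [exact Hf|]; apply neg_spec; exact Hx. }
  split.
  { split; [intros x Hx; exact (Inv_neg z p Hx)|].
    intros o args H; exact (neg_op HEA z p HJA o args H). }
  split.
  { intro HIA.
    pose mul := fun x y : subalg HIA => (exist _ (plusA p (proj1_sig x) (proj1_sig y))
       (Inv_plus HEA z p HJA _ _ (proj2_sig x) (proj2_sig y)) : subalg HIA).
    pose e := (exist _ (zeroA z A) (Inv_zero z p HJA) : subalg HIA).
    pose inv := fun x : subalg HIA => (exist _ (negA z p (proj1_sig x)) (Inv_neg z p (proj2_sig x)) : subalg HIA).
    exists mul, e, inv.
    split; [|split; [|split; [|split]]]; try reflexivity.
    - split; [|split; [|split; [|split; [|split]]]].
      + intros o a b; apply sig_ext; simpl; apply (plus_op HEA).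
      + intros o; apply sig_ext; simpl; apply (zero_op HEA).
      + intros o args; apply sig_ext; simpl; apply (neg_op HEA z p HJA).
        intro i; apply proj2_sig.
      + intros x y w; apply sig_ext; simpl; apply (plus_assoc HEA z p HJA).
      + intros x; split; apply sig_ext; simpl; apply HJA.
      + intros x; split; apply sig_ext; simpl; apply (neg_spec z p (proj2_sig x)).
    - intros x y; apply sig_ext; simpl; apply (plus_comm HEA z p HJA). }
  { intros G HG mul e inv Hgrp j Hj _ x.
    apply (hom_Inv j Hj z p); exists (inv x).
    exact (group_Inv z p (HJT G HG) mul e inv Hgrp x). }
Qed.
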